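(* Let $X$ be a Tychonoff space and $x \in X$. If player II has a winning strategy in the game $\mathsf{G}_1(\pi\mathcal{N}_x, \pi\mathcal{N}_x)$, then $X$ is supertight at $x$.
   Context: A family $\mathcal{S}$ of nonempty subsets of $X$ is a $\pi$-network at $x$ if every neighborhood of $x$ contains an element of $\mathcal{S}$. $\pi\mathcal{N}_x$ denotes the collection of all $\pi$-networks at $x$ consisting of finite sets. The game $\mathsf{G}_1(\pi\mathcal{N}_x,\pi\mathcal{N}_x)$: in each inning $n \in \omega$ player I chooses $\mathcal{S}_n \in \pi\mathcal{N}_x$, then player II chooses $S_n \in \mathcal{S}_n$; II wins iff $\{S_n : n \in \omega\} \in \pi\mathcal{N}_x$. $X$ is supertight at $x$ if for every $\pi$-network $\mathcal{P}$ at $x$ consisting of countable sets there is a countable subfamily $\mathcal{Q} \subset \mathcal{P}$ which is still a $\pi$-network at $x$. *)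

(* Defs.v *)
From mathcomp Require Import all_boot all_algebra.
From mathcomp Require Import all_classical all_reals all_analysis.
Set Implicit Arguments. Unset Strict Implicit. Unset Printing Implicit Defensive.
Local Open Scope classical_set_scope.

(* Tychonoff = completely regular (library notion, urysohn.v) + T1 (accessible). *)
Definition tychonoff_space (X : topologicalType) : Prop :=
  completely_regular_space X /\ accessible_space X.

Definition pi_network (X : topologicalType) (x : X) (S : set (set X)) : Prop :=
  (forall A, S A -> A !=set0) /\
  (forall U, nbhs x U -> exists2 A, S A & A `<=` U).

Definition piN (X : topologicalType) (x : X) (S : set (set X)) : Prop :=
  pi_network x S /\ (forall A, S A -> finite_set A).

(* A strategy for player II in G_1(piN_x, piN_x): given the moves
   S_0, ..., S_n of player I so far (the list, in order), II answers with a set.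
   (II's own earlier moves are determined by I's moves and the strategy.) *)
Definition strategyII (X : Type) := seq (set (set X)) -> set X.

Definition history (X : Type) (S : nat -> set (set X)) (n : nat) :
  seq (set (set X)) := [seq S i | i <- iota 0 n.+1].

Definition winning_strategyII (X : topologicalType) (x : X)
    (sigma : strategyII X) : Prop :=
  forall S : nat -> set (set X), (forall n, piN x (S n)) ->
    (forall n, S n (sigma (history S n))) /\
    piN x [set sigma (history S n) | n in [set: nat]].

Definition supertight (X : topologicalType) (x : X) : Prop :=
  forall P : set (set X), pi_network x P -> (forall A, P A -> countable A) ->
    exists Q : set (set X), [/\ Q `<=` P, countable Q & pi_network x Q].

(* Main.v *)
Require Import Defs.
From mathcomp Require Import all_boot all_algebra.
From mathcomp Require Import all_classical all_reals all_analysis.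

Local Open Scope classical_set_scope.

Definition N0 (X : topologicalType) : set (set X) := [set [set y] | y in [set: X]].

Lemma N0_piN (X : topologicalType) (x : X) : piN x (N0 X).
Proof.
split; last by move=> A [y _ <-]; exact: finite_set1.
split; first by move=> A [y _ <-]; exists y.
move=> U xU; exists [set x]; first by exists x.
by move=> y ->; exact: nbhs_singleton.
Qed.

Lemma iotaS0 n : iota 0 n.+1 = rcons (iota 0 n) n.
Proof. by rewrite -addn1 iotaD add0n cats1. Qed.

Lemma realize {X : topologicalType} {x : X} {sigma : strategyII X}
  (win : winning_strategyII x sigma) {h : seq (set (set X))}
  (hpi : forall i, piN x (nth (N0 X) h i)) :
  exists2 V, nbhs x V & forall a, V a ->
    exists S, piN x S /\ sigma (rcons h S) = [set a].
Proof.
apply: contrapT => nH.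
pose good a := exists S, piN x S /\ sigma (rcons h S) = [set a].
pose N := [set [set a] | a in [set a | ~ good a]].
have NpiN : piN x N.
  split; last by move=> A [y _ <-]; exact: finite_set1.
  split; first by move=> A [y _ <-]; exists y.
  move=> U xU; apply: contrapT => nA; apply: nH; exists U => // a Ua.
  apply: contrapT => nga; apply: nA; exists [set a]; first by exists a.
  by move=> y ->.
pose S i := nth N h i.
have Spi : forall i, piN x (S i).
  move=> i; rewrite /S; case: (ltnP i (size h)) => hi.
    by rewrite (set_nth_default (N0 X)).
  by rewrite nth_default.
have [Hin _] := win S Spi.
have hist : history S (size h) = rcons h N.
  rewrite /history iotaS0 map_rcons.
  by rewrite map_nth_iota0 // take_size /S nth_default.
move: (Hin (size h)); rewrite hist /S nth_default // => -[a nga Ea].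
by apply: nga; exists N; split => //; rewrite -Ea.
Qed.

Theorem theorem4p8 (X : topologicalType) (x : X) :
  tychonoff_space X ->
  (exists sigma : strategyII X, winning_strategyII x sigma) ->
  supertight x.
Proof.
move=> _ [sigma win] P [Pne Pnb] Pc.
have key : forall h : seq (set (set X)),
  exists t : set X * (nat -> X) * (nat -> set (set X)),
  (forall i, piN x (nth (N0 X) h i)) ->
  [/\ P t.1.1, (forall a, t.1.1 a -> exists k, t.1.2 k = a) &
     (forall k, piN x (t.2 k) /\ sigma (rcons h (t.2 k)) = [set t.1.2 k])].
  move=> h; case: (pselect (forall i, piN x (nth (N0 X) h i))) => hpi; last first.
    by exists (set0, fun=> x, fun=> N0 X).
  have [V xV HV] := realize win hpi.
  have [A PA AV] := Pnb V xV.
  have [a0 Aa0] := Pne A PA.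
  have /countable_injP[f finj] := Pc A PA.
  have He0 : forall k, exists a, A a /\
      ((exists b, A b /\ f b = k) -> f a = k).
    move=> k; case: (pselect (exists b, A b /\ f b = k)) => [[b [Ab fb]]|nb].
      by exists b.
    by exists a0.
  have [e He] := choice He0.
  have Hw0 : forall k, exists S, piN x S /\ sigma (rcons h S) = [set e k].
    by move=> k; have [S [? ?]] := HV (e k) (AV _ (He k).1); exists S.
  have [w Hw] := choice Hw0.
  exists (A, e, w) => _; split => //= a Aa.
  exists (f a); have [Aek fe] := He (f a).
  have {}fe := fe (ex_intro _ a (conj Aa erefl)).
  by apply: finj => //; exact: mem_set.
have [F HF] := choice key.
pose A h := (F h).1.1. pose e h := (F h).1.2. pose w h := (F h).2.
pose node := fix node (s : seq nat) : seq (set (set X)) :=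
  if s is k :: s' then rcons (node s') (w (node s') k) else [::].
have node_pi : forall s i, piN x (nth (N0 X) (node s) i).
  elim=> [|k s IH] i /=; first by rewrite nth_nil; exact: N0_piN.
  rewrite nth_rcons; case: ltnP => _; first exact: IH.
  case: eqP => _; last exact: N0_piN.
  by have [_ _ /(_ k) []] := HF (node s) (IH).
pose Q := [set A (node s) | s in [set: seq nat]].
exists Q; split.
- by move=> _ [s _ <-]; have [] := HF (node s) (node_pi s).
- apply: sub_countable (card_image_le _ _) _; exact: countableP.
- split.
    by move=> _ [s _ <-]; apply: Pne; have [] := HF (node s) (node_pi s).
  move=> U xU; apply: contrapT => nQ.
  have hs : forall s, exists k, ~ U (e (node s) k).
    move=> s; apply: contrapT => nk; apply: nQ; exists (A (node s)); first by exists s.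
    move=> a Aa; have [_ /(_ a Aa) [k ek] _] := HF (node s) (node_pi s).
    apply: contrapT => nUa; apply: nk; exists k; by rewrite /e ek.
  have [g Hg] := choice hs.
  pose sq := fix sq n := if n is m.+1 then g (sq m) :: sq m else [::].
  pose S n := w (node (sq n)) (g (sq n)).
  have Spi n : piN x (S n).
    by have [_ _ /(_ (g (sq n))) []] := HF (node (sq n)) (node_pi _).
  have Hnode : forall n, node (sq n) = [seq S i | i <- iota 0 n].
    by elim=> [//|n IH]; rewrite iotaS0 map_rcons -IH.
  have [_ [[_ Hnb] _]] := win S Spi.
  have [_ [n _ <-] sU] := Hnb U xU.
  have hn : history S n = rcons (node (sq n)) (S n).
    by rewrite Hnode /history iotaS0 map_rcons.
  have [_ _ /(_ (g (sq n))) [_ E]] := HF (node (sq n)) (node_pi _).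
  have E' : sigma (history S n) = [set e (node (sq n)) (g (sq n))].
    by rewrite hn; exact: E.
  apply: (Hg (sq n)); apply: sU; rewrite E'; reflexivity.
Qed.
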